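(* Let $A,B$ be Pareto sets of size $n$ each and let $k$ be the size of their Pareto sum. The Successive Sweep Search algorithm computes the Pareto sum of $A$ and $B$ in $\mathcal{O}(n\log n+nk)$ time using $\mathcal{O}(n+k)$ space.
   Context: For $p,p'\in\mathbb{R}^2$, $p$ dominates $p'$ if $p\neq p'$, $p.x\le p'.x$ and $p.y\le p'.y$. A Pareto set is a set $S\subset\mathbb{R}^2$ in which no point dominates another. The Successive Sweep Search algorithm first sorts $A$ and $B$ lexicographically ($S_i$ = element of rank $i$) and uses the Minkowski matrix $M_{ij}=A_i+B_j$ (computed on demand). The Pareto sum $C$ is the set of entries of $M$ not dominated by any entry of $M$. Starting with $C=\{M_{11},M_{nn}\}$ and search range $[x_{\min},x_{\max})\times[y_{\min},y_{\max})$ with $x_{\min}=M_{11}.x$, $x_{\max}=M_{nn}.x$, $y_{\min}=M_{nn}.y$, $y_{\max}=M_{11}.y$, it repeatedly finds the lexicographically smallest entry $m$ of $M$ in the current range; if none exists it stops, otherwise it adds $m$ to $C$ and sets $x_{\min}=m.x$, $y_{\max}=m.y$. The range minimum is found by a single left-to-right sweep: keep a row index $i$, starting at $i=n$ in column $1$; in each column $j$, move upward as long as $i\ge2$ and $M_{i-1,j}$ satisfies $x\ge x_{\min}$ and $y<y_{\max}$; if $M_{ij}$ lies in the range and is lexicographically smaller than the current candidate, it becomes the candidate; then move to column $j+1$ with the same $i$; after the last column the candidate is returned. *)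

(* Defs.v *)
(* Successive Sweep Search (SSS) for Pareto sums, with an
   explicit instrumented cost model (time = elementary steps, space = peak
   number of stored points/registers). *)
From mathcomp Require Import all_boot all_order all_algebra.
Set Implicit Arguments. Unset Strict Implicit. Unset Printing Implicit Defensive.
Import Order.TTheory GRing.Theory Num.Theory.
Local Open Scope ring_scope.

Section SSS.
Variable R : realDomainType.

Definition point := (R * R)%type.

Definition padd (p q : point) : point := (p.1 + q.1, p.2 + q.2).

Definition dominates (p q : point) : bool :=
  [&& p != q, p.1 <= q.1 & p.2 <= q.2].

Definition pareto_set (S : seq point) : bool :=
  uniq S && all (fun p => all (fun q => ~~ dominates p q) S) S.

Definition lexlt (p q : point) : bool := (p.1 < q.1) || ((p.1 == q.1) && (p.2 < q.2)).
Definition lexle (p q : point) : bool := (p == q) || lexlt p q.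

Definition minkowski (A B : seq point) : seq point :=
  [seq padd a b | a <- A, b <- B].

Definition pareto_sum (A B : seq point) : seq point :=
  undup [seq p <- minkowski A B | ~~ has (fun q => dominates q p) (minkowski A B)].

Fixpoint merge_c (s1 : seq point) : seq point -> seq point * nat :=
  fix m2 (s2 : seq point) :=
    match s1, s2 with
    | [::], _ => (s2, 0%N)
    | _, [::] => (s1, 0%N)
    | x1 :: s1', x2 :: s2' =>
        if lexle x1 x2 then let r := merge_c s1' s2 in (x1 :: r.1, r.2.+1)
        else let r := m2 s2' in (x2 :: r.1, r.2.+1)
    end.

(* returns (sorted list, time, peak space); fuel = size of the list suffices *)
Fixpoint msort_f (f : nat) (s : seq point) : seq point * nat * nat :=
  match f with
  | 0 => (s, 0%N, size s)
  | f'.+1 =>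
      if (size s <= 1)%N then (s, 1%N, size s) else
      let h := ((size s)./2)%N in
      let '(r1, t1, p1) := msort_f f' (take h s) in
      let '(r2, t2, p2) := msort_f f' (drop h s) in
      let '(r, t3) := merge_c r1 r2 in
      (r, (t1 + t2 + t3 + size s + 1)%N,
       maxn (size s + p1)%N (maxn (size s + size r1 + p2)%N
                                  (size r1 + size r2 + size r)%N))
  end.

Definition msort (s : seq point) := msort_f (size s) s.

Section Sweep.
Variables (SA SB : seq point) (xmin xmax ymin ymax : R).

(* entry M_{i+1,j+1} (0-based indices i j) *)
Definition entry (i j : nat) : point := padd (nth (0, 0) SA i) (nth (0, 0) SB j).

Definition in_range (p : point) : bool :=
  [&& xmin <= p.1, p.1 < xmax, ymin <= p.2 & p.2 < ymax].

Definition up_ok (p : point) : bool := (xmin <= p.1) && (p.2 < ymax).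

Fixpoint climb (f i j : nat) : nat * nat :=
  match f with
  | 0 => (i, 0%N)
  | f'.+1 =>
      if (1 <= i)%N && up_ok (entry i.-1 j)
      then let r := climb f' i.-1 j in (r.1, r.2.+1)
      else (i, 0%N)
  end.

Fixpoint sweep (js : seq nat) (i : nat) (cand : option point) : option point * nat :=
  match js with
  | [::] => (cand, 0%N)
  | j :: js' =>
      let '(i', st) := climb i i j in
      let m := entry i' j in
      let better := if cand is Some c then lexlt m c else true in
      let cand' := if in_range m && better then Some m else cand in
      let '(res, t) := sweep js' i' cand' in
      (res, (t + st + 1)%N)
  end.

(* lexicographically smallest entry in the current range (or None), and time *)
Definition range_min : option point * nat :=
  let n := size SA in
  let '(c, t) := sweep (iota 0 n) n.-1 None in (c, t.+1).

End Sweep.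

Fixpoint sss_loop (f : nat) (SA SB : seq point) (xmax ymin : R)
    (C : seq point) (xmin ymax : R) : seq point * nat * nat :=
  match f with
  | 0 => (C, 0%N, 0%N)
  | f'.+1 =>
      let '(res, t) := range_min SA SB xmin xmax ymin ymax in
      let sp := (size SA + size SB + size C + 10)%N in
      match res with
      | None => (C, t.+1, sp)
      | Some m =>
          let '(C', t', sp') := sss_loop f' SA SB xmax ymin (rcons C m) m.1 m.2 in
          (C', (t + t' + 1)%N, maxn sp sp')
      end
  end.

Definition SSS (A B : seq point) : seq point * nat * nat :=
  let '(SA, tA, pA) := msort A in
  let '(SB, tB, pB) := msort B in
  let n := size SA in
  let M11 := entry SA SB 0 0 in
  let Mnn := entry SA SB n.-1 n.-1 in
  let C0 := undup [:: M11; Mnn] in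
  let '(C, tL, pL) := sss_loop (n * n).+1 SA SB Mnn.1 Mnn.2 C0 M11.1 M11.2 in
  (C, (tA + tB + tL + 1)%N,
   maxn (size B + pA)%N (maxn (size A + size SA + pB)%N pL)).

Definition SSS_output A B := (SSS A B).1.1.
Definition SSS_time A B := (SSS A B).1.2.
Definition SSS_space A B := (SSS A B).2.

End SSS.

(* Main.v *)
Require Import Defs.
From mathcomp Require Import all_boot all_order all_algebra.
From mathcomp Require Import lra zify.
Set Implicit Arguments. Unset Strict Implicit. Unset Printing Implicit Defensive.
Import Order.TTheory GRing.Theory Num.Theory.
Local Open Scope ring_scope.

Section Lex.
Variable R : realDomainType.
Implicit Types p q r : point R.

Lemma lexle_total : total (@lexle R).
Proof.
move=> [a b] [c d]; rewrite /lexle /lexlt /= !xpair_eqE.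
by case: (ltgtP a c) => //= _; case: (ltgtP b d).
Qed.

Lemma lexle_trans : transitive (@lexle R).
Proof.
move=> [a b] [c d] [e f]; rewrite /lexle /lexlt /= !xpair_eqE.
case/orP=> [/andP[/eqP<- /eqP<-] //|H1].
case/orP=> [/andP[/eqP<- /eqP<-]|H2]; first by rewrite H1 orbT.
apply/orP; right.
case/orP: H1 => [h1|/andP[/eqP h1 h1']]; case/orP: H2 => [h2|/andP[/eqP h2 h2']].
- apply/orP; left; exact: lt_trans h1 h2.
- by rewrite -h2 h1.
- by rewrite h1 h2.
- by rewrite h1 h2 eqxx (lt_trans h1' h2') orbT.
Qed.

Lemma lexltNge p q : lexlt p q = ~~ lexle q p.
Proof.
case: p q => [a b] [c d]; rewrite /lexle /lexlt /= !xpair_eqE.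
by case: (ltgtP a c) => //= _; case: (ltgtP b d).
Qed.

Lemma lexlt_le p q : lexlt p q -> lexle p q.
Proof. by rewrite /lexle => ->; rewrite orbT. Qed.

End Lex.

Lemma merge_cE (R : realDomainType) (s1 s2 : seq (point R)) :
  (merge_c s1 s2).1 = merge (@lexle R) s1 s2 /\ ((merge_c s1 s2).2 <= size s1 + size s2)%N.
Proof.
elim: s1 s2 => [|x1 s1 IH1] s2; first by case: s2.
elim: s2 => [|x2 s2 IH2] /=; first by rewrite addn0.
case: ifP => _ /=.
  by case: (IH1 (x2 :: s2)) => -> /= h; split => //; rewrite /= in h; lia.
by move: IH2 => /= [-> h]; split => //; lia.
Qed.

Lemma msort_fP (R : realDomainType) (f : nat) (s : seq (point R)) :
  (size s <= f)%N ->
  let: (r, t, p) := msort_f f s in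
  [/\ perm_eq r s, sorted (@lexle R) r,
      (t <= 4 * size s * up_log 2 (size s) + size s + 1)%N
    & (p <= 4 * size s)%N].
Proof.
elim: f s => [|f IH] s hs /=.
  by move: hs; rewrite leqn0 => /eqP/size0nil ->.
case: ifP => hs1.
  split; [exact: perm_refl | by case: s hs1 {hs} => [|x [|]] | lia | lia].
set h := ((size s)./2)%N.
have hh : (h = size s %/ 2)%N by rewrite /h -divn2.
have hsz1 : size (take h s) = h by rewrite size_take; case: ifP => //; lia.
have hsz2 : size (drop h s) = (size s - h)%N by rewrite size_drop.
have := IH (take h s); rewrite hsz1; case: (msort_f f (take h s)) => [[r1 t1] p1].
move=> /(_ ltac:(lia)) [pr1 so1 ht1 hp1].
have := IH (drop h s); rewrite hsz2; case: (msort_f f (drop h s)) => [[r2 t2] p2].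
move=> /(_ ltac:(lia)) [pr2 so2 ht2 hp2].
have [hm1 hm2] := merge_cE r1 r2.
case: (merge_c r1 r2) hm1 hm2 => r t3 /= -> ht3.
have sr1 : size r1 = h by rewrite (perm_size pr1).
have sr2 : size r2 = (size s - h)%N by rewrite (perm_size pr2).
have sr : size (merge (@lexle R) r1 r2) = size s.
  rewrite size_merge size_cat sr1 sr2; lia.
rewrite sr1 sr2 sr in ht3 *.
split.
- rewrite perm_merge -[s in perm_eq _ s](cat_take_drop h).
  exact: perm_cat.
- exact: (merge_sorted (@lexle_total R) so1 so2).
- have hn : (1 < size s)%N by lia.
  set m := size s in hn ht1 ht2 ht3 *.
  have e : up_log 2 m = (up_log 2 (m - h)).+1.
    have -> : m = (m.-1).+1 by lia.
    rewrite up_log2S; last by lia.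
    congr (up_log 2 _).+1; rewrite hh; lia.
  have la : (up_log 2 h <= up_log 2 (m - h))%N by apply: leq_up_log; lia.
  rewrite e.
  have := leq_mul (leqnn h) la.
  nia.
- nia.
Qed.

Definition smono (R : realDomainType) (S : seq (point R)) :=
  forall i j, (i < j)%N -> (j < size S)%N ->
    (nth (0, 0) S i).1 < (nth (0, 0) S j).1 /\ (nth (0, 0) S j).2 < (nth (0, 0) S i).2.

Lemma smono_sorted (R : realDomainType) (A S : seq (point R)) :
  pareto_set A -> perm_eq S A -> sorted (@lexle R) S -> smono S.
Proof.
case/andP=> uA /allP pA pSA so i j hij hj.
have hi : (i < size S)%N by apply: ltn_trans hj.
have := sorted_ltn_nth (@lexle_trans R) (0, 0) so.
move=> /(_ i j hi hj hij).
have uS : uniq S by rewrite (perm_uniq pSA).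
have neq : nth (0, 0) S i != nth (0, 0) S j.
  by rewrite (nth_uniq _ hi hj uS) neq_ltn hij.
have mi : nth (0, 0) S i \in A by rewrite -(perm_mem pSA) mem_nth.
have mj : nth (0, 0) S j \in A by rewrite -(perm_mem pSA) mem_nth.
have /allP/(_ _ mj) := pA _ mi.
have /allP/(_ _ mi) := pA _ mj.
have neq2 : nth (0, 0) S j != nth (0, 0) S i by rewrite eq_sym.
rewrite /lexle (negbTE neq) /= /dominates neq neq2 /=.
case: (nth (0, 0) S i) => a b; case: (nth (0, 0) S j) => c d /=.
rewrite /lexlt /=.
case: (ltgtP a c) => //=.
- by move=> _ _; rewrite -ltNge.
- by move=> _ _ /negP nb /ltW bd; case: nb.
Qed.

Lemma lexlt_le' (R : realDomainType) (p q : point R) : lexlt p q -> lexle p q.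
Proof. by rewrite /lexle => ->; rewrite orbT. Qed.
Lemma smono_le (R : realDomainType) (S : seq (point R)) i j : smono S ->
  (i <= j)%N -> (j < size S)%N ->
    (nth (0, 0) S i).1 <= (nth (0, 0) S j).1 /\ (nth (0, 0) S j).2 <= (nth (0, 0) S i).2.
Proof.
move=> m; rewrite leq_eqVlt => /orP[/eqP->|h] hj; first by rewrite !lexx.
by have [h1 h2] := m _ _ h hj; rewrite !ltW.
Qed.

Section Sw.
Variable R : realDomainType.
Variables SA SB : seq (point R).
Variable n : nat.
Hypothesis hA : size SA = n.
Hypothesis hB : size SB = n.
Hypothesis mA : smono SA.
Hypothesis mB : smono SB.

Local Notation E := (entry SA SB).

Lemma entry_le r r' j j' : (r <= r')%N -> (r' < n)%N -> (j <= j')%N -> (j' < n)%N ->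
  (E r j).1 <= (E r' j').1 /\ (E r' j').2 <= (E r j).2.
Proof.
move=> h1 h2 h3 h4; rewrite /entry /padd /=.
have [a1 a2] := smono_le mA h1 ltac:(by rewrite hA).
have [b1 b2] := smono_le mB h3 ltac:(by rewrite hB).
split; lra.
Qed.

Lemma entry_ltx r r' j : (r < r')%N -> (r' < n)%N -> (j < n)%N ->
  (E r j).1 < (E r' j).1.
Proof.
move=> h1 h2 h3; rewrite /entry /padd /=.
have [a1 a2] := mA h1 ltac:(by rewrite hA).
lra.
Qed.

Variables xmin xmax ymin ymax : R.

Lemma up_ok_mono r r' j j' : (r <= r')%N -> (r' < n)%N -> (j <= j')%N -> (j' < n)%N ->
  up_ok xmin ymax (E r j) -> up_ok xmin ymax (E r' j').
Proof.
move=> h1 h2 h3 h4; have [e1 e2] := entry_le h1 h2 h3 h4.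
rewrite /up_ok => /andP[u1 u2]; apply/andP; split; lra.
Qed.

Lemma climbP j f i : (i <= f)%N ->
  let: (i', st) := climb SA SB xmin ymax f i j in
  [/\ (i' <= i)%N, st = (i - i')%N, (i' < i)%N -> up_ok xmin ymax (E i' j)
    & (i' = 0)%N \/ ~~ up_ok xmin ymax (E i'.-1 j)].
Proof.
elim: f i => [|f IH] i hi /=.
  by move: hi; rewrite leqn0 => /eqP ->; split => //; left.
case: ifP => hc.
  case/andP: hc => hi1 hup.
  have := IH i.-1 ltac:(lia); case: (climb SA SB xmin ymax f i.-1 j) => i' st /=.
  case=> h1 -> h3 h4; split; [lia|lia| |exact: h4].
  move=> hlt; case: (ltnP i' i.-1) => h; first exact: h3.
  by have -> : i' = i.-1 by lia.
split; [lia|lia|lia|].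
case: i hi hc => [|i] hi hc; first by left.
by right; move: hc => /= ->.
Qed.

Definition Jinv i j := (i < n)%N && (up_ok xmin ymax (E i j) || (i == n.-1)).

Lemma columnP j i : (j < n)%N -> Jinv i j ->
  let: (i', st) := climb SA SB xmin ymax i i j in
  [/\ Jinv i' j, st = (i - i')%N, (i' <= i)%N &
   forall r, (r < n)%N -> in_range xmin xmax ymin ymax (E r j) ->
     in_range xmin xmax ymin ymax (E i' j) /\ lexle (E i' j) (E r j)].
Proof.
move=> hj /andP[hin hJ].
have := climbP j (leqnn i); case: (climb SA SB xmin ymax i i j) => i' st.
case=> h1 h2 h3 h4.
have Ji' : Jinv i' j.
  apply/andP; split; first lia.
  case: (ltnP i' i) => h; first by rewrite h3.
  by have -> : i' = i by lia.
split => // r hr hrin.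
have upr : up_ok xmin ymax (E r j).
  by move: hrin; rewrite /in_range /up_ok => /and4P[-> _ _ ->].
have hir : (i' <= r)%N.
  rewrite leqNgt; apply/negP => hri.
  case: h4 => [|h4]; first lia.
  by move/negP: h4; apply; apply: (up_ok_mono (r:=r) (j:=j)) => //; lia.
have upi : up_ok xmin ymax (E i' j).
  case/andP: Ji' => _ /orP[//|/eqP ei].
  by apply: (up_ok_mono (r:=r) (j:=j)) => //; lia.
have [e1 e2] := entry_le hir hr (leqnn j) hj.
split.
  move: hrin upi; rewrite /in_range /up_ok => /and4P[_ a2 a3 _] /andP[b1 b4].
  apply/and4P; split => //; lra.
move: hir; rewrite leq_eqVlt => /orP[/eqP->|hlt]; first by rewrite /lexle eqxx.
apply: lexlt_le; rewrite /lexlt.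
by rewrite (entry_ltx hlt hr hj).
Qed.


Definition Sin j0 m q := exists r j, [/\ (r < n)%N, (j0 <= j)%N, (j < j0 + m)%N,
  q = E r j & in_range xmin xmax ymin ymax q].

Lemma Sin0 j0 q : ~ Sin j0 0 q.
Proof. by case=> r [j [_ h1 h2 _ _]]; lia. Qed.

Lemma SinS j0 m q : Sin j0 m.+1 q ->
  (exists2 r, (r < n)%N & q = E r j0 /\ in_range xmin xmax ymin ymax q) \/ Sin j0.+1 m q.
Proof.
case=> r [j [h1 h2 h3 h4 h5]].
case: (ltnP j0 j) => hj.
  by right; exists r, j; split => //; lia.
by left; exists r => //; split => //; have <- : j = j0 by lia.
Qed.

Lemma SinW j0 m q : Sin j0.+1 m q -> Sin j0 m.+1 q.
Proof. by case=> r [j [h1 h2 h3 h4 h5]]; exists r, j; split => //; lia. Qed.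

Lemma Sin_here j0 m r : (r < n)%N -> in_range xmin xmax ymin ymax (E r j0) -> Sin j0 m.+1 (E r j0).
Proof. by move=> hr hin; exists r, j0; split => //; lia. Qed.

Definition upd (m0 : point R) (b : bool) cand :=
  if b && (if cand is Some c then lexlt m0 c else true) then Some m0 else cand.

Lemma cand_upd1 (m0 q : point R) cand (b : bool) : cand = Some q ->
  exists2 c, upd m0 b cand = Some c & lexle c q.
Proof.
rewrite /upd; move=> ->; case: ifP => [/andP[_ hl]|_]; first by exists m0 => //; apply: lexlt_le.
by exists q => //; rewrite /lexle eqxx.
Qed.

Lemma cand_upd2 (m0 : point R) cand (b : bool) : b ->
  exists2 c, upd m0 b cand = Some c & lexle c m0.
Proof.
rewrite /upd; move=> ->; case: cand => [c|] /=; last by exists m0 => //; rewrite /lexle eqxx.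
case: ifP => hb; first by exists m0 => //; rewrite /lexle eqxx.
by exists c => //; move: hb; rewrite lexltNge => /negbFE.
Qed.

Lemma sweep_cons j js i cand : sweep SA SB xmin xmax ymin ymax (j :: js) i cand =
  let '(i', st) := climb SA SB xmin ymax i i j in
  let '(res, t) := sweep SA SB xmin xmax ymin ymax js i'
     (upd (E i' j) (in_range xmin xmax ymin ymax (E i' j)) cand) in
  (res, (t + st + 1)%N).
Proof. by []. Qed.

Lemma sweepP m j0 i cand : (j0 + m <= n)%N -> ((0 < m)%N -> Jinv i j0) ->
  let: (res, t) := sweep SA SB xmin xmax ymin ymax (iota j0 m) i cand in
  [/\ forall p, res = Some p -> cand = Some p \/ Sin j0 m p,
      forall q, cand = Some q \/ Sin j0 m q -> exists2 p, res = Some p & lexle p q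
    & (t <= m + i)%N].
Proof.
elim: m j0 i cand => [|m IH] j0 i cand hm hJ.
  split => //; first by move=> p ->; left.
  move=> q [->|/Sin0 //]; exists q => //; by rewrite /lexle eqxx.
have hj : (j0 < n)%N by lia.
have -> : iota j0 m.+1 = j0 :: iota j0.+1 m by [].
rewrite sweep_cons.
have := columnP hj (hJ isT).
case: (climb SA SB xmin ymax i i j0) => i' st [Ji' hst hii hcol].
have hJ' : (0 < m)%N -> Jinv i' j0.+1.
  move=> hm0; case/andP: Ji' => hi' /orP[hu|he]; apply/andP; split => //.
    by rewrite (up_ok_mono (r:=i') (j:=j0)) //; lia.
  by rewrite he orbT.
have hi' : (i' < n)%N by case/andP: Ji'.
have Hc1 := @cand_upd1 (E i' j0) _ cand (in_range xmin xmax ymin ymax (E i' j0)).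
have Hc2 := @cand_upd2 (E i' j0) cand (in_range xmin xmax ymin ymax (E i' j0)).
set cand' := upd _ _ _ in Hc1 Hc2 *.
have ecand : cand' = upd (E i' j0) (in_range xmin xmax ymin ymax (E i' j0)) cand by [].
clearbody cand'.
have := IH j0.+1 i' cand' ltac:(lia) hJ'.
case: (sweep SA SB xmin xmax ymin ymax (iota j0.+1 m) i' cand') => res t [H1 H2 H3].
split.
- move=> p /H1 [|hs]; last by right; apply: SinW.
  move=> ec; move: ecand; rewrite ec /upd.
  case: ifP => [/andP[hin _] [->]|_ <-]; last by left.
  by right; apply: Sin_here.
- move=> q hq.
  case: hq => [/Hc1 [c hc hcq]|/SinS [[r hr [-> hin]]|hs]].
  + have [p hp hpc] := H2 c (or_introl hc); exists p => //; exact: lexle_trans hpc hcq.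
  + have [hin' hle] := hcol r hr hin.
    have [c hc hcm] := Hc2 hin'.
    have [p hp hpc] := H2 c (or_introl hc); exists p => //.
    exact: lexle_trans hpc (lexle_trans hcm hle).
  + exact: H2 q (or_intror hs).
- lia.
Qed.


Lemma range_minP : (0 < n)%N ->
  let: (res, t) := range_min SA SB xmin xmax ymin ymax in
  [/\ forall p, res = Some p -> Sin 0 n p,
      forall q, Sin 0 n q -> exists2 p, res = Some p & lexle p q
    & (t <= 2 * n)%N].
Proof.
move=> hn; rewrite /range_min hA.
have := @sweepP n 0 n.-1 None (leqnn _).
case: (sweep SA SB xmin xmax ymin ymax (iota 0 n) n.-1 None) => res t.
case.
  by move=> _; apply/andP; split; [lia|rewrite eqxx orbT].
move=> H1 H2 H3; split.
- by move=> p /H1 [].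
- by move=> q hq; apply: H2; right.
- lia.
Qed.

End Sw.

Lemma dom_lexlt (R : realDomainType) (q p : point R) : dominates q p -> lexlt q p.
Proof.
case: q p => [a b] [c d]; rewrite /dominates /lexlt /= xpair_eqE negb_and.
case/and3P => hne h1 h2.
move: h1; rewrite le_eqVlt => /orP[/eqP e|->//]; subst c.
rewrite eqxx /= in hne *; by rewrite ltxx /= lt_neqAle hne h2.
Qed.

Lemma lexle_dom (R : realDomainType) (m p : point R) :
  lexle m p -> p.1 <= m.1 -> m != p -> dominates m p.
Proof.
case: m p => [a b] [c d]; rewrite /dominates /lexle /lexlt /= => + h1 hne.
rewrite hne /=; case/orP => [/eqP e|]; first by rewrite e eqxx in hne.
case/orP => [h|/andP[/eqP e h]]; first lra.
by rewrite e lexx ltW.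
Qed.

Section Loop.
Variable R : realDomainType.
Variables SA SB : seq (point R).
Variable n : nat.
Hypothesis hA : size SA = n.
Hypothesis hB : size SB = n.
Hypothesis mA : smono SA.
Hypothesis mB : smono SB.
Hypothesis hn : (0 < n)%N.

Local Notation E := (entry SA SB).
Definition isE q := exists r j, [/\ (r < n)%N, (j < n)%N & q = E r j].
Definition Par q := isE q /\ forall q', isE q' -> ~~ dominates q' q.
Local Notation Mnn := (E n.-1 n.-1).
Local Notation M11 := (E 0 0).

Lemma isE_miny q : isE q -> Mnn.2 <= q.2.
Proof.
case=> r [j [hr hj ->]].
have [_ h1] := entry_le hA hB mA mB (r:=r) (r':=n.-1) (j:=j) (j':=n.-1) ltac:(lia) ltac:(lia) ltac:(lia) ltac:(lia).
exact: h1.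
Qed.

Lemma isE_minx q : isE q -> M11.1 <= q.1.
Proof.
case=> r [j [hr hj ->]].
have [h1 _] := entry_le hA hB mA mB (r:=0) (r':=r) (j:=0) (j':=j) ltac:(lia) ltac:(lia) ltac:(lia) ltac:(lia).
exact: h1.
Qed.

Lemma isE_eq11 q : isE q -> q.1 <= M11.1 -> q = M11.
Proof.
case=> r [j [hr hj ->]] h.
have hSA : (r < size SA)%N by rewrite hA.
have hSB : (j < size SB)%N by rewrite hB.
have [a1 _] := smono_le mA (leq0n r) hSA.
have [b1 _] := smono_le mB (leq0n j) hSB.
case: r hr hSA a1 h => [|r] hr hSA a1 h; case: j hj hSB b1 h => [|j] hj hSB b1 h //.
- have [c1 _] := mB (ltn0Sn j) hSB; exfalso; move: h; rewrite /entry /padd /=; lra.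
- have [c1 _] := mA (ltn0Sn r) hSA; exfalso; move: h; rewrite /entry /padd /=; lra.
- have [c1 _] := mA (ltn0Sn r) hSA; exfalso; move: h; rewrite /entry /padd /=; lra.
Qed.

Lemma isE_eqnn q : isE q -> q.2 <= Mnn.2 -> q = Mnn.
Proof.
case=> r [j [hr hj ->]] h.
have hSA : (n.-1 < size SA)%N by rewrite hA; lia.
have hSB : (n.-1 < size SB)%N by rewrite hB; lia.
have hr1 : (r <= n.-1)%N by lia.
have hj1 : (j <= n.-1)%N by lia.
have [_ a1] := smono_le mA hr1 hSA.
have [_ b1] := smono_le mB hj1 hSB.
case: (ltnP r n.-1) => hr'.
  have [_ c1] := mA hr' hSA; exfalso; move: h; rewrite /entry /padd /=; lra.
case: (ltnP j n.-1) => hj'.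
  have [_ c1] := mB hj' hSB; exfalso; move: h; rewrite /entry /padd /=; lra.
have -> : r = n.-1 by lia.
by have -> : j = n.-1 by lia.
Qed.

Lemma isE11 : isE M11.
Proof. by exists 0%N, 0%N; split. Qed.

Lemma isEnn : isE Mnn.
Proof. by exists n.-1, n.-1; split => //; lia. Qed.

Lemma Par11 : Par M11.
Proof.
split; first exact: isE11.
move=> q hq; apply/negP => /and3P[hne h1 _].
by move/eqP: hne; apply; apply: isE_eq11.
Qed.

Lemma Parnn : Par Mnn.
Proof.
split; first exact: isEnn.
move=> q hq; apply/negP => /and3P[hne _ h2].
by move/eqP: hne; apply; apply: isE_eqnn.
Qed.

Lemma Sin_iff xmin xmax ymin ymax q :
  Sin SA SB n xmin xmax ymin ymax 0 n q <-> isE q /\ in_range xmin xmax ymin ymax q.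
Proof.
split.
  by case=> r [j [h1 h2 h3 h4 h5]]; split => //; exists r, j; split.
by case=> [[r [j [h1 h2 h3]]] h4]; exists r, j; split.
Qed.

Lemma sss_loop_S f xmax ymin C xmin ymax :
  sss_loop f.+1 SA SB xmax ymin C xmin ymax =
  let '(res, t) := range_min SA SB xmin xmax ymin ymax in
  match res with
  | None => (C, t.+1, (size SA + size SB + size C + 10)%N)
  | Some m =>
      let '(C', t', sp') := sss_loop f SA SB xmax ymin (rcons C m) m.1 m.2 in
      (C', (t + t' + 1)%N, maxn (size SA + size SB + size C + 10)%N sp')
  end.
Proof. by []. Qed.

Lemma loopP f C (c : point R) k :
  Par c -> uniq C -> (forall p, p \in C -> Par p) ->
  (forall p, Par p -> (p \in C) = ((p.1 <= c.1) || (p == Mnn))) ->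
  (forall C', uniq C' -> (forall p, p \in C' -> Par p) -> (size C' <= k)%N) ->
  (k < f + size C)%N ->
  let: (C', t, sp) := sss_loop f SA SB Mnn.1 Mnn.2 C c.1 c.2 in
  [/\ forall p, Par p <-> p \in C', (t <= (k.+1 - size C) * (2 * n + 2))%N
    & (sp <= 2 * n + k + 10)%N].
Proof.
elim: f C c => [|f IH] C c Pc uC PC IC hk hf.
  by have := hk C uC PC; lia.
have skC := hk C uC PC.
rewrite sss_loop_S.
have := range_minP hA hB mA mB c.1 Mnn.1 Mnn.2 c.2 hn.
case: (range_min SA SB c.1 Mnn.1 Mnn.2 c.2) => res t [R1 R2 R3].
have inr : forall p, Par p -> p \notin C -> isE p /\ in_range c.1 Mnn.1 Mnn.2 c.2 p.
  move=> p Pp; rewrite (IC p Pp) negb_or -ltNge => /andP[hx hne].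
  case: (Pp) => Ep ndp; split => //.
  have hy := isE_miny Ep.
  have hx2 : p.1 < Mnn.1.
    rewrite ltNge; apply/negP => h.
    by have := ndp _ isEnn; rewrite /dominates eq_sym hne h hy.
  have hy2 : p.2 < c.2.
    rewrite ltNge; apply/negP => h.
    have := ndp _ Pc.1; rewrite /dominates (ltW hx) h !andbT.
    by move/negPn/eqP => e; move: hx; rewrite e ltxx.
  by rewrite /in_range (ltW hx) hx2 hy hy2.
have sizes : (size SA + size SB + size C + 10 <= 2 * n + k + 10)%N.
  by rewrite hA hB; lia.
case: res R1 R2 => [m|] R1 R2; last first.
  split.
  - move=> p; split; last exact: PC.
    move=> Pp; apply/negPn/negP => hnC.
    have [Ep hin] := inr p Pp hnC.
    by have [q] := R2 p (proj2 (Sin_iff _ _ _ _ p) (conj Ep hin)).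
  - nia.
  - exact: sizes.
have [Em hinm] := proj1 (Sin_iff _ _ _ _ m) (R1 m erefl).
have minm : forall q, isE q -> in_range c.1 Mnn.1 Mnn.2 c.2 q -> lexle m q.
  move=> q Eq hq; have [p [<-]] := R2 q (proj2 (Sin_iff _ _ _ _ q) (conj Eq hq)).
  done.
move: (hinm); rewrite /in_range => /and4P[mx1 mx2 my1 my2].
have Pm : Par m.
  split => // q Eq; apply/negP => dqm.
  move: (dqm); rewrite /dominates => /and3P[hne hq1 hq2].
  have hqx : c.1 < q.1.
    rewrite ltNge; apply/negP => h.
    have := Pc.2 q Eq; rewrite /dominates h /=.
    have -> : q.2 <= c.2 by apply: ltW; apply: le_lt_trans my2.
    rewrite andbT negbK => /eqP e.
    by move: my2 hq2; rewrite -e; lra.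
  have hinq : in_range c.1 Mnn.1 Mnn.2 c.2 q.
    rewrite /in_range (ltW hqx) (isE_miny Eq) (le_lt_trans hq1 mx2) /=.
    exact: le_lt_trans my2.
  have := minm q Eq hinq.
  by rewrite -[lexle _ _]negbK -lexltNge dom_lexlt.
have mx : c.1 < m.1.
  rewrite lt_neqAle mx1 andbT; apply/negP => /eqP e.
  have := Pc.2 m Em; rewrite /dominates -e lexx (ltW my2) !andbT negbK => /eqP e2.
  by move: my2; rewrite e2 ltxx.
have mC : m \notin C.
  rewrite (IC m Pm) negb_or -ltNge mx /=.
  by apply/negP => /eqP e; move: mx2; rewrite e ltxx.
have uC' : uniq (rcons C m) by rewrite rcons_uniq mC uC.
have PC' : forall p, p \in rcons C m -> Par p.
  by move=> p; rewrite mem_rcons inE => /orP[/eqP->|/PC].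
have IC' : forall p, Par p -> (p \in rcons C m) = ((p.1 <= m.1) || (p == Mnn)).
  move=> p Pp; rewrite mem_rcons inE (IC p Pp).
  case: (boolP (p == m)) => [/eqP->|hpm] /=; first by rewrite lexx.
  case: (boolP (p == Mnn)) => [|_]; first by rewrite !orbT.
  rewrite !orbF.
  case: (leP p.1 c.1) => h1.
    by apply/esym; apply: le_trans h1 (ltW mx).
  apply/esym/negbTE/negP => h2.
  have hy : p.2 < c.2.
    rewrite ltNge; apply/negP => h.
    have := Pp.2 c Pc.1; rewrite /dominates (ltW h1) h !andbT negbK => /eqP e.
    by move: h1; rewrite e ltxx.
  have hinp : in_range c.1 Mnn.1 Mnn.2 c.2 p.
    rewrite /in_range (ltW h1) (isE_miny Pp.1) hy (le_lt_trans h2 mx2).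
    done.
  have := Pp.2 m Em.
  by rewrite (lexle_dom (minm p Pp.1 hinp) h2) // eq_sym.
have hsk := hk _ uC' PC'.
rewrite size_rcons in hsk.
have := IH (rcons C m) m Pm uC' PC' IC' hk ltac:(rewrite size_rcons; lia).
case: (sss_loop f SA SB Mnn.1 Mnn.2 (rcons C m) m.1 m.2) => [[C' t'] sp'] [H1 H2 H3].
split => //.
- rewrite size_rcons in H2.
  have e : (k.+1 - size C = (k - size C).+1)%N by lia.
  have e2 : (k.+1 - (size C).+1 = (k - size C))%N by lia.
  rewrite e; rewrite e2 in H2.
  move: (k - size C)%N H2 => d H2.
  nia.
- by rewrite geq_max sizes H3.
Qed.

End Loop.

Theorem mainTheorem9 :
  exists c : nat,
  forall (R : realDomainType) (n : nat) (A B : seq (point R)),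
    (0 < n)%N -> size A = n -> size B = n ->
    pareto_set A -> pareto_set B ->
    let k := size (pareto_sum A B) in
    [/\ SSS_output A B =i pareto_sum A B,
        (SSS_time A B <= c * (n * up_log 2 n + n * k))%N
      & (SSS_space A B <= c * (n + k))%N].
Proof.
exists 10%N => R n A B hn sA sB pA pB k.
have := msort_fP (leqnn (size A)); have := msort_fP (leqnn (size B)).
rewrite /SSS_output /SSS_time /SSS_space /SSS /msort.
case: (msort_f (size B) B) => [[SB tB] pB'] [prB soB htB hpB].
case: (msort_f (size A) A) => [[SA tA] pA'] [prA soA htA hpA].
have hSA : size SA = n by rewrite (perm_size prA).
have hSB : size SB = n by rewrite (perm_size prB).
have mA := smono_sorted pA prA soA.
have mB := smono_sorted pB prB soB.
rewrite hSA; cbv zeta.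
have memE : forall q, isE SA SB n q <-> q \in minkowski A B.
  move=> q; split.
    case=> r [j [hr hj ->]]; apply/allpairsP.
    exists (nth (0, 0) SA r, nth (0, 0) SB j); split => //.
    - by rewrite -(perm_mem prA) mem_nth // hSA.
    - by rewrite -(perm_mem prB) mem_nth // hSB.
  case/allpairsP => [[a b] [/= ha hb ->]].
  move: ha hb; rewrite -(perm_mem prA) -(perm_mem prB).
  case/(nthP (0, 0)) => r hr <-; case/(nthP (0, 0)) => j hj <-.
  by exists r, j; split; [rewrite -hSA|rewrite -hSB|].
have parE : forall p, Par SA SB n p <-> p \in pareto_sum A B.
  move=> p; rewrite /pareto_sum mem_undup mem_filter; split.
    case=> Ep ndp; rewrite (proj1 (memE p) Ep) andbT.
    by apply/hasPn => q /memE Eq; apply: ndp.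
  case/andP => hnd /memE Ep; split => // q /memE Eq.
  by move/hasPn: hnd; apply.
have kpos : (0 < k)%N.
  have := proj1 (parE _) (Par11 hSA hSB mA mB hn).
  by rewrite /k; case: (pareto_sum A B).
have kle : (k <= n * n)%N.
  rewrite /k /pareto_sum; apply: (leq_trans (size_undup _)).
  rewrite size_filter; apply: (leq_trans (count_size _ _)).
  by rewrite /minkowski size_allpairs sA sB.
set C0 := undup [:: entry SA SB 0 0; entry SA SB n.-1 n.-1].
have sC0 : (0 < size C0)%N.
  have : entry SA SB 0 0 \in C0 by rewrite /C0 mem_undup inE eqxx.
  by case: (C0).
have := @loopP R SA SB n hSA hSB mA mB hn ((n * n).+1) C0 (entry SA SB 0 0) k
  (Par11 hSA hSB mA mB hn).
have u0 : uniq C0 by exact: undup_uniq.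
have P0 : forall p, p \in C0 -> Par SA SB n p.
  move=> p; rewrite /C0 mem_undup !inE => /orP[/eqP->|/eqP->].
    exact: Par11.
  exact: Parnn.
have I0 : forall p, Par SA SB n p -> (p \in C0) = ((p.1 <= (entry SA SB 0 0).1) || (p == entry SA SB n.-1 n.-1)).
  move=> p Pp; rewrite /C0 mem_undup !inE.
  case: (boolP (p == entry SA SB 0 0)) => [/eqP->|hne] /=; first by rewrite lexx.
  case: (leP p.1 (entry SA SB 0 0).1) => h //=.
  by exfalso; move/eqP: hne; apply; apply: (isE_eq11 hSA hSB mA mB Pp.1 h).
have hk0 : forall C', uniq C' -> (forall p, p \in C' -> Par SA SB n p) -> (size C' <= k)%N.
  move=> C' uC' PC'; apply: uniq_leq_size => // p /PC' /parE.
  done.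
move/(_ u0 P0 I0 hk0 ltac:(lia)).
case: (sss_loop _ _ _ _ _ C0 _ _) => [[C tL] pL] [H1 H2 H3] /=.
split.
- by move=> p; apply/idP/idP => [/H1/parE|/parE/H1].
- have h2 : (tL <= k * (2 * n + 2))%N.
    apply: leq_trans H2 _; apply: leq_mul => //; lia.
  rewrite sA in htA; rewrite sB in htB.
  nia.
- rewrite sA sB; rewrite sA in hpA; rewrite sB in hpB.
  rewrite ?geq_max; apply/and3P; split; lia.
Qed.
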